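(* Let $X$ be a real separable Hilbert space, $A\in\mathcal L(X)$ monotone, $x^\dagger,\bar x\in X$, $y=Ax^\dagger$, and $d(R):=\min\{\|x^\dagger-\bar x-Aw\|:\|w\|\le R\}$. Suppose there are constants $K,q>0$ and $\underline R>1$ with $$d(R)\le\frac{K}{(\log R)^q}\quad\text{for all }R\ge\underline R.$$ Then the bias $B^A_{x^\dagger}(\alpha):=\alpha\|(A+\alpha I)^{-1}(x^\dagger-\bar x)\|$ satisfies $B^A_{x^\dagger}(\alpha)=\mathcal O\big((\log\frac1\alpha)^{-q}\big)$ as $\alpha\to0$. Moreover, if $\alpha(\delta)=c\,\delta^\zeta$ with constants $c>0$ and $0<\zeta<1$, then for all $y^\delta$ with $\|y-y^\delta\|\le\delta$, $$\|x^\delta_{\alpha(\delta)}-x^\dagger\|=\mathcal O\big((\log\tfrac1\delta)^{-q}\big)\quad\text{as }\delta\to0.$$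
   Context: $A$ monotone: $\langle Ax,x\rangle\ge0$ for all $x$. $x^\delta_\alpha:=(A+\alpha I)^{-1}(y^\delta+\alpha\bar x)$ is the Lavrentiev-regularized solution. $\mathcal L(X)$: bounded linear operators on $X$. *)

(* Defs.v *)
From Stdlib Require Import Reals Lra ClassicalEpsilon.
Open Scope R_scope.

Record RHilbert := {
  carrier :> Type;
  hzero : carrier;
  hadd : carrier -> carrier -> carrier;
  hopp : carrier -> carrier;
  hscal : R -> carrier -> carrier;
  hinner : carrier -> carrier -> R;
  hadd_assoc : forall x y z, hadd x (hadd y z) = hadd (hadd x y) z;
  hadd_comm : forall x y, hadd x y = hadd y x;
  hadd_zero : forall x, hadd hzero x = x;
  hadd_opp : forall x, hadd x (hopp x) = hzero;
  hscal_assoc : forall a b x, hscal a (hscal b x) = hscal (a * b) x;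
  hscal_one : forall x, hscal 1 x = x;
  hscal_addr : forall a x y, hscal a (hadd x y) = hadd (hscal a x) (hscal a y);
  hscal_addl : forall a b x, hscal (a + b) x = hadd (hscal a x) (hscal b x);
  hinner_sym : forall x y, hinner x y = hinner y x;
  hinner_addl : forall x y z, hinner (hadd x y) z = hinner x z + hinner y z;
  hinner_scall : forall a x y, hinner (hscal a x) y = a * hinner x y;
  hinner_pos : forall x, 0 <= hinner x x;
  hinner_def : forall x, hinner x x = 0 -> x = hzero;
  hcomplete : forall u : nat -> carrier,
    (forall eps, 0 < eps -> exists N, forall n m, (n >= N)%nat -> (m >= N)%nat ->
        sqrt (hinner (hadd (u n) (hopp (u m))) (hadd (u n) (hopp (u m)))) < eps) ->
    exists l, forall eps, 0 < eps -> exists N, forall n, (n >= N)%nat ->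
        sqrt (hinner (hadd (u n) (hopp l)) (hadd (u n) (hopp l))) < eps;
  hseparable : exists e : nat -> carrier, forall x eps, 0 < eps ->
    exists n, sqrt (hinner (hadd x (hopp (e n))) (hadd x (hopp (e n)))) < eps
}.

Arguments hzero {_}.
Arguments hadd {_}.
Arguments hopp {_}.
Arguments hscal {_}.
Arguments hinner {_}.

Definition hsub {X : RHilbert} (x y : X) : X := hadd x (hopp y).
Definition hnorm {X : RHilbert} (x : X) : R := sqrt (hinner x x).

Definition bounded_linear {X : RHilbert} (A : X -> X) : Prop :=
  (forall x y, A (hadd x y) = hadd (A x) (A y)) /\
  (forall a x, A (hscal a x) = hscal a (A x)) /\
  (exists M, forall x, hnorm (A x) <= M * hnorm x).

Definition monotone {X : RHilbert} (A : X -> X) : Prop :=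
  forall x, 0 <= hinner (A x) x.

(** (A + alpha I)^{-1} b : the (unique, for alpha > 0 and A monotone bounded)
    solution z of A z + alpha z = b, chosen by Hilbert's epsilon. *)
Definition resolvent {X : RHilbert} (A : X -> X) (alpha : R) (b : X) : X :=
  epsilon (inhabits (@hzero X)) (fun z => hadd (A z) (hscal alpha z) = b).

Definition bias {X : RHilbert} (A : X -> X) (xdag xbar : X) (alpha : R) : R :=
  alpha * hnorm (resolvent A alpha (hsub xdag xbar)).

Definition lavrentiev {X : RHilbert} (A : X -> X) (xbar ydelta : X) (alpha : R) : X :=
  resolvent A alpha (hadd ydelta (hscal alpha xbar)).

(* Main.v *)
Require Import Defs.
From Stdlib Require Import Reals Lra Lia ClassicalEpsilon.
Open Scope R_scope.

Arguments hadd_assoc {_}. Arguments hadd_comm {_}. Arguments hadd_zero {_}. Arguments hadd_opp {_}.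
Arguments hscal_assoc {_}. Arguments hscal_one {_}. Arguments hscal_addr {_}. Arguments hscal_addl {_}.
Arguments hinner_sym {_}. Arguments hinner_addl {_}. Arguments hinner_scall {_}. Arguments hinner_pos {_}.
Arguments hinner_def {_}.
Lemma Rabs_m1 : Rabs (-1) = 1.
Proof. rewrite Rabs_left; lra. Qed.
Section Hil.
Context {X : RHilbert}.
Implicit Types x y z a b c d : X.

Lemma addr0 x : hadd x hzero = x.
Proof. rewrite hadd_comm; apply hadd_zero. Qed.

Lemma addrK_r a b c : hadd a c = hadd b c -> a = b.
Proof.
  intros H. rewrite <- (addr0 a), <- (addr0 b), <- (hadd_opp c), !hadd_assoc, H; reflexivity.
Qed.

Lemma scal0 x : hscal 0 x = hzero.
Proof.
  apply (addrK_r _ _ (hscal 0 x)). rewrite hadd_zero, <- hscal_addl. f_equal; ring.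
Qed.

Lemma opp_scal x : hopp x = hscal (-1) x.
Proof.
  apply (addrK_r _ _ x). rewrite hadd_comm, hadd_opp.
  rewrite <- (hscal_one x) at 2. rewrite <- hscal_addl. replace (-1+1) with 0 by ring.
  now rewrite scal0.
Qed.

Lemma scalr0 (r : R) : hscal r (@hzero X) = hzero.
Proof. rewrite <- (scal0 hzero) at 1. rewrite hscal_assoc, Rmult_0_r. apply scal0. Qed.

Lemma sub_def a b : hsub a b = hadd a (hscal (-1) b).
Proof. unfold hsub; now rewrite opp_scal. Qed.

Lemma subrr a : hsub a a = hzero.
Proof. apply hadd_opp. Qed.

Lemma sub0 a b : hsub a b = hzero -> a = b.
Proof.
  intros H. apply (addrK_r _ _ (hopp b)). rewrite hadd_opp. exact H.
Qed.

Lemma sub_add a b c : hadd a b = c -> a = hsub c b.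
Proof.
  intros <-. unfold hsub. rewrite <- hadd_assoc, hadd_opp, addr0; reflexivity.
Qed.

Lemma addKsub (p q : X) : hsub (hadd p q) q = p.
Proof. symmetry; now apply sub_add. Qed.

Lemma addACA a b c d : hadd (hadd a b) (hadd c d) = hadd (hadd a c) (hadd b d).
Proof.
  rewrite <- !hadd_assoc. f_equal. rewrite !hadd_assoc. f_equal. apply hadd_comm.
Qed.

Lemma subADD a b c d : hadd (hsub a c) (hsub b d) = hsub (hadd a b) (hadd c d).
Proof.
  rewrite !sub_def, hscal_addr. apply addACA.
Qed.

Lemma oppsub b d : hscal (-1) (hsub b d) = hadd (hscal (-1) b) d.
Proof.
  rewrite sub_def, hscal_addr, hscal_assoc. replace (-1 * -1) with 1 by ring.
  now rewrite hscal_one.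
Qed.

Lemma subSUB a b c d : hsub (hsub a c) (hsub b d) = hsub (hsub a b) (hsub c d).
Proof.
  rewrite (sub_def (hsub a c)), (sub_def (hsub a b)), !oppsub, !(sub_def a).
  rewrite addACA. reflexivity.
Qed.

Lemma subsub_same a b c : hsub (hsub a c) (hsub b c) = hsub a b.
Proof. rewrite subSUB, subrr, sub_def, scalr0, addr0. reflexivity. Qed.

Lemma scal_sub r a b : hscal r (hsub a b) = hsub (hscal r a) (hscal r b).
Proof. rewrite !sub_def, hscal_addr, !hscal_assoc. f_equal. f_equal. ring. Qed.

Lemma sub_opp a b : hsub a b = hscal (-1) (hsub b a).
Proof.
  rewrite oppsub, sub_def. apply hadd_comm.
Qed.

Lemma sub_chain a b c : hsub a c = hadd (hsub a b) (hsub b c).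
Proof.
  rewrite !sub_def, hadd_assoc. f_equal. rewrite <- hadd_assoc.
  rewrite <- opp_scal, (hadd_comm (hopp b)), hadd_opp, addr0. reflexivity.
Qed.

Lemma inner_addr x y z : hinner x (hadd y z) = hinner x y + hinner x z.
Proof. rewrite hinner_sym, hinner_addl, !(hinner_sym _ x); reflexivity. Qed.
Lemma inner_scalr r x y : hinner x (hscal r y) = r * hinner x y.
Proof. rewrite hinner_sym, hinner_scall, hinner_sym; reflexivity. Qed.
Lemma inner0l x : hinner hzero x = 0.
Proof. rewrite <- (scal0 hzero), hinner_scall. ring. Qed.

Lemma inner_sub_sub a b : hinner (hsub a b) (hsub a b) = hinner a a - 2 * hinner a b + hinner b b.
Proof.
  rewrite sub_def, hinner_addl, !inner_addr, !hinner_scall, !inner_scalr, (hinner_sym b a). ring.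
Qed.
Lemma inner_add_add a b : hinner (hadd a b) (hadd a b) = hinner a a + 2 * hinner a b + hinner b b.
Proof.
  rewrite hinner_addl, !inner_addr, (hinner_sym b a). ring.
Qed.

Lemma hnorm_pos x : 0 <= hnorm x.
Proof. apply sqrt_pos. Qed.

Lemma hnorm_sq x : hnorm x * hnorm x = hinner x x.
Proof. apply sqrt_sqrt, hinner_pos. Qed.

Lemma hnorm0 x : hnorm x = 0 -> x = hzero.
Proof. intros H. apply hinner_def. rewrite <- hnorm_sq, H. ring. Qed.

Lemma hnorm_scal r x : hnorm (hscal r x) = Rabs r * hnorm x.
Proof.
  unfold hnorm. rewrite hinner_scall, inner_scalr, <- Rmult_assoc.
  rewrite sqrt_mult_alt by (apply Rle_0_sqr). fold (Rsqr r). rewrite sqrt_Rsqr_abs. reflexivity.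
Qed.

Lemma inner0r x : hinner x hzero = 0.
Proof. rewrite hinner_sym; apply inner0l. Qed.

Lemma CS_sq x y : hinner x y * hinner x y <= hinner x x * hinner y y.
Proof.
  destruct (Req_dec (hinner y y) 0) as [H0|H0].
  - apply hinner_def in H0. subst. rewrite !inner0r. rewrite !Rmult_0_r. lra.
  - pose proof (hinner_pos y) as Hy.
    set (t := hinner x y / hinner y y).
    pose proof (hinner_pos (hsub x (hscal t y))) as H.
    rewrite inner_sub_sub, inner_scalr, hinner_scall, inner_scalr in H.
    assert (Hy' : 0 < hinner y y) by lra.
    assert (E: hinner x x * hinner y y - hinner x y * hinner x y =
       hinner y y * (hinner x x - 2 * (t * hinner x y) + t * (t * hinner y y)))
      by (unfold t; field; lra).
    assert (0 <= hinner y y * (hinner x x - 2 * (t * hinner x y) + t * (t * hinner y y)))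
      by (apply Rmult_le_pos; lra).
    lra.
Qed.

Lemma CS x y : Rabs (hinner x y) <= hnorm x * hnorm y.
Proof.
  unfold hnorm. rewrite <- sqrt_mult by apply hinner_pos.
  rewrite <- sqrt_Rsqr_abs. apply sqrt_le_1_alt. unfold Rsqr. apply CS_sq.
Qed.

Lemma CS' x y : hinner x y <= hnorm x * hnorm y.
Proof. eapply Rle_trans; [apply Rle_abs | apply CS]. Qed.

Lemma htriangle x y : hnorm (hadd x y) <= hnorm x + hnorm y.
Proof.
  unfold hnorm at 1. rewrite inner_add_add.
  pose proof (CS' x y). pose proof (hnorm_pos x). pose proof (hnorm_pos y).
  rewrite <- (sqrt_square (hnorm x + hnorm y)) by lra.
  apply sqrt_le_1_alt. rewrite <- !hnorm_sq. nra.
Qed.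

Lemma tri_sub a b c : hnorm (hsub a c) <= hnorm (hsub a b) + hnorm (hsub b c).
Proof. rewrite (sub_chain a b c). apply htriangle. Qed.

Lemma norm_sub_sym a b : hnorm (hsub a b) = hnorm (hsub b a).
Proof. rewrite sub_opp, hnorm_scal. rewrite Rabs_m1. ring. Qed.

Lemma norm_sub_tri a b : hnorm (hsub a b) <= hnorm a + hnorm b.
Proof. rewrite sub_def. eapply Rle_trans. apply htriangle. rewrite hnorm_scal, Rabs_m1. lra. Qed.

Lemma norm_add_sub (p q : X) : hnorm p <= hnorm (hadd p q) + hnorm q.
Proof. rewrite <- (addKsub p q) at 1. apply norm_sub_tri. Qed.


Lemma hnorm_zero : hnorm (@hzero X) = 0.
Proof. unfold hnorm. rewrite inner0r. apply sqrt_0. Qed.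

Lemma sub_self_eq (p w : X) : hsub p w = p -> w = hzero.
Proof.
  intros H. unfold hsub in H. rewrite <- (addr0 p) in H at 2.
  rewrite (hadd_comm p), (hadd_comm p hzero) in H. apply addrK_r in H.
  rewrite opp_scal in H.
  rewrite <- (hscal_one w), <- (scalr0 (-1)), <- H, hscal_assoc. f_equal. ring.
Qed.

Lemma scal_eq0 r (w : X) : r <> 0 -> hscal r w = hzero -> w = hzero.
Proof.
  intros Hr H. rewrite <- (hscal_one w). replace 1 with (/ r * r) by (field; auto).
  rewrite <- hscal_assoc, H. apply scalr0.
Qed.

Lemma norm0_eq a b : hnorm (hsub a b) = 0 -> a = b.
Proof. intros H. apply sub0, hnorm0, H. Qed.

Lemma small_zero r : 0 <= r -> (forall eps, 0 < eps -> r <= eps) -> r = 0.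
Proof.
  intros H0 H. destruct (Req_dec r 0); auto. specialize (H (r/2)). lra.
Qed.

Fixpoint iterT (T : X -> X) (n : nat) : X :=
  match n with O => hzero | S n => T (iterT T n) end.

Lemma contraction (T : X -> X) (k : R) : 0 <= k < 1 ->
  (forall x y, hnorm (hsub (T x) (T y)) <= k * hnorm (hsub x y)) ->
  exists l, T l = l.
Proof.
  intros Hk HT. set (u := iterT T).
  set (D := hnorm (hsub (u 1%nat) (u 0%nat))).
  assert (HD : 0 <= D) by apply hnorm_pos.
  assert (P1 : forall j, hnorm (hsub (u j) (u 0%nat)) <= D / (1 - k)).
  { induction j.
    - rewrite subrr, hnorm_zero. apply Rmult_le_pos; auto. apply Rlt_le, Rinv_0_lt_compat; lra.
    - eapply Rle_trans. apply (tri_sub _ (u 1%nat)).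
      assert (hnorm (hsub (u (S j)) (u 1%nat)) <= k * hnorm (hsub (u j) (u 0%nat))) by apply HT.
      fold D. apply Rle_trans with (k * (D / (1-k)) + D).
      + pose proof (Rmult_le_compat_l k _ _ (proj1 Hk) IHj). lra.
      + right. field. lra. }
  assert (P2 : forall n j, hnorm (hsub (u (n + j)%nat) (u n)) <= k ^ n * (D / (1 - k))).
  { induction n; intros j.
    - simpl. rewrite Rmult_1_l. apply P1.
    - simpl. eapply Rle_trans. apply HT.
      rewrite Rmult_assoc. apply Rmult_le_compat_l; [lra|]. apply IHn. }
  assert (Hc : exists l, forall eps, 0 < eps -> exists N, forall n, (n >= N)%nat ->
        hnorm (hsub (u n) l) < eps).
  { apply hcomplete. intros eps Heps.
    destruct (pow_lt_1_zero k ltac:(rewrite Rabs_pos_eq; lra) (eps * (1 - k) / (D + 1)))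
      as [N HN].
    { apply Rmult_lt_0_compat. apply Rmult_lt_0_compat; lra. apply Rinv_0_lt_compat; lra. }
    exists N. intros n m Hn Hm.
    assert (Hgen : forall n m, (n >= N)%nat -> (n <= m)%nat -> hnorm (hsub (u m) (u n)) < eps).
    { intros n0 m0 Hn0 Hnm. replace m0 with (n0 + (m0 - n0))%nat by lia.
      eapply Rle_lt_trans. apply P2.
      specialize (HN n0 Hn0). rewrite Rabs_pos_eq in HN by (apply pow_le; lra).
      pose proof (pow_le k n0 (proj1 Hk)).
      apply Rle_lt_trans with (eps * (1 - k) / (D + 1) * (D / (1 - k))).
      apply Rmult_le_compat_r. apply Rmult_le_pos; auto. apply Rlt_le, Rinv_0_lt_compat; lra. lra.
      replace (eps * (1 - k) / (D + 1) * (D / (1 - k))) with (eps * (D / (D+1))) by (field; lra).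
      assert (D / (D+1) < 1). { apply Rmult_lt_reg_r with (D+1). lra. field_simplify; lra. }
      nra. }
    change (hnorm (hsub (u n) (u m)) < eps).
    destruct (Nat.le_ge_cases n m).
    - rewrite norm_sub_sym. apply Hgen; auto.
    - apply Hgen; auto. }
  destruct Hc as [l Hl]. exists l. apply norm0_eq.
  apply small_zero. apply hnorm_pos. intros eps Heps.
  destruct (Hl (eps/2) ltac:(lra)) as [N HN].
  eapply Rle_trans. apply (tri_sub _ (u (S N))).
  assert (hnorm (hsub (T l) (u (S N))) <= k * hnorm (hsub l (u N))) by apply HT.
  rewrite (norm_sub_sym l (u N)) in H.
  pose proof (HN N (le_n _)). pose proof (HN (S N) ltac:(lia)).
  pose proof (hnorm_pos (hsub (u N) l)).
  assert (k * hnorm (hsub (u N) l) <= 1 * (eps/2)) by (apply Rmult_le_compat; lra).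
  lra.
Qed.

End Hil.

Section Op.
Context {X : RHilbert} (A : X -> X) (HA : bounded_linear A) (Hmon : monotone A).
Implicit Types x y z a b c d : X.

Definition L (al : R) z := hadd (A z) (hscal al z).

Lemma A_add x y : A (hadd x y) = hadd (A x) (A y).
Proof. apply (proj1 HA). Qed.
Lemma A_scal r x : A (hscal r x) = hscal r (A x).
Proof. apply (proj1 (proj2 HA)). Qed.
Lemma A_sub x y : A (hsub x y) = hsub (A x) (A y).
Proof. rewrite !sub_def, A_add, A_scal. reflexivity. Qed.
Lemma A_bound : exists M, 0 <= M /\ forall x, hnorm (A x) <= M * hnorm x.
Proof.
  destruct (proj2 (proj2 HA)) as [M HM]. exists (Rabs M). split. apply Rabs_pos.
  intros x. eapply Rle_trans. apply HM. apply Rmult_le_compat_r. apply hnorm_pos. apply Rle_abs.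
Qed.

Lemma L_sub al x y : L al (hsub x y) = hsub (L al x) (L al y).
Proof. unfold L. rewrite A_sub, scal_sub, subADD. reflexivity. Qed.

Lemma L_add al x y : L al (hadd x y) = hadd (L al x) (L al y).
Proof. unfold L. rewrite A_add, hscal_addr, addACA. reflexivity. Qed.

Lemma L_scal al r x : L al (hscal r x) = hscal r (L al x).
Proof. unfold L. rewrite A_scal, hscal_addr, !hscal_assoc, Rmult_comm. reflexivity. Qed.

Lemma coercive al z : 0 < al -> al * hnorm z <= hnorm (L al z).
Proof.
  intros Hal.
  assert (H1 : al * (hnorm z * hnorm z) <= hinner (L al z) z).
  { unfold L. rewrite hinner_addl, hinner_scall, hnorm_sq. pose proof (Hmon z). lra. }
  pose proof (CS' (L al z) z). pose proof (hnorm_pos z).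
  destruct (Req_dec (hnorm z) 0) as [E|E].
  - rewrite E, Rmult_0_r. apply hnorm_pos.
  - assert (0 < hnorm z) by lra.
    apply Rmult_le_reg_r with (hnorm z); auto. nra.
Qed.

Lemma L_bound al : 0 < al -> exists M, 0 <= M /\ forall z, hnorm (L al z) <= (M + al) * hnorm z.
Proof.
  intros Hal. destruct A_bound as [M [HM HM']]. exists M. split; auto. intros z.
  unfold L. eapply Rle_trans. apply htriangle. rewrite hnorm_scal, Rabs_pos_eq by lra.
  specialize (HM' z). lra.
Qed.

Lemma L_surj al b : 0 < al -> exists z, L al z = b.
Proof.
  intros Hal. destruct (L_bound al Hal) as [M [HM HLM]].
  set (t := al / ((M + al) * (M + al))).
  set (k2 := 1 - al * al / ((M + al) * (M + al))).
  assert (Hk2 : 0 <= k2 < 1).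
  { unfold k2. assert (0 < al * al / ((M + al) * (M + al))).
    { apply Rdiv_lt_0_compat; nra. }
    assert (al * al / ((M + al) * (M + al)) <= 1).
    { apply Rmult_le_reg_r with ((M + al) * (M + al)). nra. field_simplify; nra. }
    lra. }
  set (T := fun z => hsub z (hscal t (hsub (L al z) b))).
  assert (HT : forall x y, hnorm (hsub (T x) (T y)) <= sqrt k2 * hnorm (hsub x y)).
  { intros x y. unfold T. rewrite subSUB, <- scal_sub, subsub_same, <- L_sub.
    set (v := hsub x y).
    unfold hnorm at 1. rewrite inner_sub_sub, inner_scalr, hinner_scall, inner_scalr.
    unfold hnorm. rewrite <- sqrt_mult_alt by lra. apply sqrt_le_1_alt.
    rewrite <- !hnorm_sq.
    assert (Hc : al * (hnorm v * hnorm v) <= hinner v (L al v)).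
    { rewrite hinner_sym. unfold L. rewrite hinner_addl, hinner_scall, hnorm_sq.
      pose proof (Hmon v). lra. }
    pose proof (HLM v). pose proof (hnorm_pos v). pose proof (hnorm_pos (L al v)).
    assert (Hsq : hnorm (L al v) * hnorm (L al v) <= ((M + al) * hnorm v) * ((M + al) * hnorm v))
      by (apply Rmult_le_compat; lra).
    assert (Ht : 0 < t) by (unfold t; apply Rdiv_lt_0_compat; nra).
    assert (E : k2 * (hnorm v * hnorm v) =
      hnorm v * hnorm v - 2 * (t * (al * (hnorm v * hnorm v))) + t * (t * (((M + al) * hnorm v) * ((M + al) * hnorm v))))
      by (unfold k2, t; field; nra).
    rewrite E.
    assert (t * (t * (hnorm (L al v) * hnorm (L al v))) <= t * (t * (((M + al) * hnorm v) * ((M + al) * hnorm v)))).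
    { apply Rmult_le_compat_l; [lra|]. apply Rmult_le_compat_l; lra. }
    assert (t * (al * (hnorm v * hnorm v)) <= t * hinner v (L al v)) by (apply Rmult_le_compat_l; lra).
    lra. }
  destruct (contraction T (sqrt k2)) as [l Hl].
  { split. apply sqrt_pos. rewrite <- sqrt_1. apply sqrt_lt_1_alt. lra. }
  { exact HT. }
  exists l. unfold T in Hl. apply sub_self_eq in Hl. apply scal_eq0 in Hl.
  - apply sub0, Hl.
  - unfold t. apply Rgt_not_eq, Rdiv_lt_0_compat; nra.
Qed.

Lemma resolvent_spec al b : 0 < al -> L al (resolvent A al b) = b.
Proof.
  intros Hal. unfold resolvent. apply (epsilon_spec (inhabits hzero) (fun z => L al z = b)).
  apply L_surj; auto.
Qed.


Lemma norm_le_sub (p q : X) : hnorm p <= hnorm (hsub p q) + hnorm q.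
Proof.
  assert (E : hadd (hsub p q) q = p).
  { unfold hsub. rewrite <- hadd_assoc, (hadd_comm (hopp q) q), hadd_opp, addr0. reflexivity. }
  rewrite <- E at 1. apply htriangle.
Qed.

Lemma bias_bound (xdag xbar : X) al (w : X) : 0 < al ->
  bias A xdag xbar al <= hnorm (hsub (hsub xdag xbar) (A w)) + 2 * al * hnorm w.
Proof.
  intros Hal. unfold bias. set (b := hsub xdag xbar).
  set (z := resolvent A al b). set (u := resolvent A al w).
  assert (Hz : L al z = b) by apply resolvent_spec, Hal.
  assert (Hu : L al u = w) by apply resolvent_spec, Hal.
  assert (E1 : L al (hsub z (A u)) = hsub b (A w)).
  { rewrite L_sub, Hz. f_equal. rewrite <- Hu. unfold L. rewrite A_add, A_scal. reflexivity. }
  pose proof (coercive al (hsub z (A u)) Hal) as C1. rewrite E1 in C1.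
  pose proof (coercive al u Hal) as C2. rewrite Hu in C2.
  assert (E2 : A u = hsub w (hscal al u)) by (apply sub_add, Hu).
  assert (C3 : hnorm (A u) <= 2 * hnorm w).
  { rewrite E2. eapply Rle_trans. apply norm_sub_tri. rewrite hnorm_scal, Rabs_pos_eq by lra. lra. }
  pose proof (norm_le_sub z (A u)).
  assert (al * hnorm z <= al * (hnorm (hsub z (A u)) + hnorm (A u))) by (apply Rmult_le_compat_l; lra).
  assert (al * hnorm (A u) <= al * (2 * hnorm w)) by (apply Rmult_le_compat_l; lra).
  lra.
Qed.

Lemma error_bound (xdag xbar yd : X) al : 0 < al ->
  hnorm (hsub (lavrentiev A xbar yd al) xdag) <=
    hnorm (hsub (A xdag) yd) / al + bias A xdag xbar al.
Proof.
  intros Hal. unfold bias, lavrentiev.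
  set (x := resolvent A al (hadd yd (hscal al xbar))).
  set (z := resolvent A al (hsub xdag xbar)).
  assert (Hx : L al x = hadd yd (hscal al xbar)) by apply resolvent_spec, Hal.
  assert (Hz : L al z = hsub xdag xbar) by apply resolvent_spec, Hal.
  set (e := hadd (hsub x xdag) (hscal al z)).
  assert (E : L al e = hsub yd (A xdag)).
  { unfold e. rewrite L_add, L_sub, L_scal, Hx, Hz. unfold L at 1.
    rewrite <- subADD, scal_sub, <- hadd_assoc, subADD, (hadd_comm (hscal al xdag)), subrr, addr0.
    reflexivity. }
  pose proof (coercive al e Hal) as C. rewrite E, norm_sub_sym in C.
  assert (Hx2 : hsub x xdag = hsub e (hscal al z)) by (unfold e; symmetry; apply addKsub).
  rewrite Hx2. eapply Rle_trans. apply norm_sub_tri. rewrite hnorm_scal, Rabs_pos_eq by lra.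
  assert (hnorm e <= hnorm (hsub (A xdag) yd) / al).
  { apply Rmult_le_reg_l with al; auto.
    replace (al * (hnorm (hsub (A xdag) yd) / al)) with (hnorm (hsub (A xdag) yd)) by (field; lra).
    lra. }
  lra.
Qed.

End Op.

Lemma exp_le x y : x <= y -> exp x <= exp y.
Proof. intros [H|H]. left; apply exp_increasing; auto. subst; lra. Qed.

Lemma ln_le_sub1 u : 0 < u -> ln u <= u - 1.
Proof. intros Hu. pose proof (exp_ineq1_le (ln u)). rewrite exp_ln in H; lra. Qed.

Lemma key p q : 0 < p -> 0 < q -> exists C, 0 < C /\
  forall t, 0 < t -> exp (- p * t) <= C * exp (- q * ln t).
Proof.
  intros Hp Hq. exists (exp (- q - q * ln (p / q))). split. apply exp_pos.
  intros t Ht. rewrite <- exp_plus. apply exp_le.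
  assert (He : 0 < p / q) by (apply Rdiv_lt_0_compat; auto).
  pose proof (ln_le_sub1 (p / q * t) ltac:(nra)) as H.
  rewrite ln_mult in H by auto.
  assert (q * (ln (p / q) + ln t) <= q * (p / q * t - 1)) by (apply Rmult_le_compat_l; lra).
  replace (q * (p / q * t - 1)) with (p * t - q) in H0 by (field; lra).
  lra.
Qed.

Lemma ln_inv_exp a : 0 < a -> a = exp (- ln (1 / a)).
Proof.
  intros Ha. unfold Rdiv. rewrite Rmult_1_l, ln_Rinv, Ropp_involutive, exp_ln; auto.
Qed.

Lemma part1 (X : RHilbert) (A : X -> X) (xdag xbar : X)
  (HA : bounded_linear A) (Hmon : monotone A)
  (K q Rlow : R) (HK : 0 < K) (Hq : 0 < q) (HRlow : 1 < Rlow)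
  (Hd : forall Rr, Rlow <= Rr ->
     exists w : X, hnorm w <= Rr /\
       hnorm (hsub (hsub xdag xbar) (A w)) <= K / Rpower (ln Rr) q) :
  exists C a0, 0 < C /\ 0 < a0 < 1 /\ forall alpha, 0 < alpha < a0 ->
     0 < ln (1 / alpha) /\
     bias A xdag xbar alpha <= C * exp (- q * ln (ln (1 / alpha))).
Proof.
  destruct (key (1/2) q ltac:(lra) Hq) as [C1 [HC1 HC1']].
  assert (HlR : 0 < ln Rlow) by (rewrite <- ln_1; apply ln_increasing; lra).
  exists (K * exp (q * ln 2) + 2 * C1), (exp (- (2 * ln Rlow))).
  split. pose proof (exp_pos (q * ln 2)). nra.
  split. split. apply exp_pos. rewrite <- exp_0. apply exp_increasing. lra.
  intros al [Hal0 Hal1].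
  set (t := ln (1 / al)).
  assert (Ea : al = exp (- t)) by (apply ln_inv_exp; auto).
  assert (Ht : 2 * ln Rlow < t).
  { rewrite Ea in Hal1. apply exp_lt_inv in Hal1. lra. }
  split. lra.
  set (Rr := exp (t / 2)).
  assert (HR : Rlow <= Rr).
  { unfold Rr. rewrite <- (exp_ln Rlow) by lra. apply exp_le. lra. }
  destruct (Hd Rr HR) as [w [Hw1 Hw2]].
  eapply Rle_trans. apply (bias_bound A HA Hmon xdag xbar al w Hal0).
  assert (E1 : K / Rpower (ln Rr) q = K * exp (q * ln 2) * exp (- q * ln t)).
  { unfold Rr. rewrite ln_exp. unfold Rpower. unfold Rdiv at 2. rewrite ln_mult by lra.
    rewrite ln_Rinv by lra. unfold Rdiv. rewrite <- exp_Ropp, Rmult_assoc, <- exp_plus.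
    f_equal. f_equal. ring. }
  assert (E2 : al * Rr = exp (- (1/2) * t)).
  { rewrite Ea. unfold Rr. rewrite <- exp_plus. f_equal. field. }
  assert (H3 : 2 * al * hnorm w <= 2 * (C1 * exp (- q * ln t))).
  { specialize (HC1' t ltac:(lra)). rewrite <- E2 in HC1'.
    assert (al * hnorm w <= al * Rr) by (apply Rmult_le_compat_l; lra). lra. }
  rewrite E1 in Hw2. fold t. lra.
Qed.

Theorem mainTheorem13 (X : RHilbert) (A : X -> X) (xdag xbar : X)
  (HA : bounded_linear A) (Hmon : monotone A)
  (K q Rlow : R) (HK : 0 < K) (Hq : 0 < q) (HRlow : 1 < Rlow)
  (Hd : forall Rr, Rlow <= Rr ->
     exists w : X, hnorm w <= Rr /\
       hnorm (hsub (hsub xdag xbar) (A w)) <= K / Rpower (ln Rr) q) :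
  (exists C a0, 0 < a0 /\ forall alpha, 0 < alpha < a0 ->
      bias A xdag xbar alpha <= C * Rpower (ln (1 / alpha)) (- q)) /\
  (forall c zeta, 0 < c -> 0 < zeta < 1 ->
     exists C d0, 0 < d0 /\ forall delta (ydelta : X), 0 < delta < d0 ->
       hnorm (hsub (A xdag) ydelta) <= delta ->
       hnorm (hsub (lavrentiev A xbar ydelta (c * Rpower delta zeta)) xdag)
         <= C * Rpower (ln (1 / delta)) (- q)).
Proof.
  destruct (part1 X A xdag xbar HA Hmon K q Rlow HK Hq HRlow Hd) as [C [a0 [HC [Ha0 P]]]].
  split.
  { exists C, a0. split. lra. intros al Hal. unfold Rpower. apply P, Hal. }
  intros c zeta Hc Hz.
  destruct (key (1 - zeta) q ltac:(lra) Hq) as [C2 [HC2 HC2']].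
  set (S := 1 + Rabs (ln c - ln a0) / zeta + 2 * Rabs (ln c) / zeta).
  assert (HS1 : Rabs (ln c - ln a0) / zeta >= 0).
  { apply Rle_ge, Rmult_le_pos. apply Rabs_pos. apply Rlt_le, Rinv_0_lt_compat; lra. }
  assert (HS2 : 2 * Rabs (ln c) / zeta >= 0).
  { apply Rle_ge, Rmult_le_pos. pose proof (Rabs_pos (ln c)); lra. apply Rlt_le, Rinv_0_lt_compat; lra. }
  exists (C2 / c + C * exp (- q * ln (zeta / 2))), (exp (- S)).
  split. apply exp_pos.
  intros delta yd [Hd0 Hd1] Hy.
  set (s := ln (1 / delta)).
  assert (Ed : delta = exp (- s)) by (apply ln_inv_exp; auto).
  assert (Hs : S < s). { rewrite Ed in Hd1. apply exp_lt_inv in Hd1. lra. }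
  unfold S in Hs.
  set (al := c * Rpower delta zeta).
  assert (Eal : al = exp (ln c - zeta * s)).
  { unfold al, Rpower. rewrite Ed at 1. rewrite ln_exp, <- (exp_ln c) at 1 by lra.
    rewrite <- exp_plus. f_equal. ring. }
  assert (Hal0 : 0 < al) by (rewrite Eal; apply exp_pos).
  assert (Hzs1 : ln c - ln a0 < zeta * s).
  { assert (Rabs (ln c - ln a0) < zeta * s).
    { apply Rle_lt_trans with (zeta * (Rabs (ln c - ln a0) / zeta)).
      right; field; lra. apply Rmult_lt_compat_l; lra. }
    pose proof (Rle_abs (ln c - ln a0)). lra. }
  assert (Hzs2 : 2 * ln c <= zeta * s).
  { assert (2 * Rabs (ln c) < zeta * s).
    { apply Rle_lt_trans with (zeta * (2 * Rabs (ln c) / zeta)).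
      right; field; lra. apply Rmult_lt_compat_l; lra. }
    pose proof (Rle_abs (ln c)). lra. }
  assert (Hal1 : al < a0).
  { rewrite Eal, <- (exp_ln a0) by lra. apply exp_increasing. lra. }
  destruct (P al (conj Hal0 Hal1)) as [_ Hb].
  assert (Et : ln (1 / al) = zeta * s - ln c).
  { rewrite Eal. unfold Rdiv. rewrite Rmult_1_l, ln_Rinv, ln_exp by apply exp_pos. ring. }
  rewrite Et in Hb.
  assert (Hs0 : 0 < s) by lra.
  assert (Hln : ln (zeta / 2) + ln s <= ln (zeta * s - ln c)).
  { rewrite <- ln_mult by lra.
    assert (Hp : 0 < zeta / 2 * s) by (apply Rmult_lt_0_compat; lra).
    assert (Hle : zeta / 2 * s <= zeta * s - ln c) by lra.
    destruct (Rle_lt_or_eq_dec _ _ Hle) as [E|E].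
    left. apply ln_increasing; auto. rewrite E; lra. }
  assert (Hb2 : bias A xdag xbar al <= C * exp (- q * ln (zeta / 2)) * exp (- q * ln s)).
  { eapply Rle_trans. apply Hb. rewrite Rmult_assoc, <- exp_plus.
    apply Rmult_le_compat_l. lra. apply exp_le. nra. }
  pose proof (error_bound A HA Hmon xdag xbar yd al Hal0) as Herr.
  assert (Hq1 : hnorm (hsub (A xdag) yd) / al <= delta / al).
  { apply Rmult_le_compat_r. apply Rlt_le, Rinv_0_lt_compat; auto. auto. }
  assert (Edal : delta / al = / c * exp (- (1 - zeta) * s)).
  { rewrite Eal, Ed. unfold Rdiv. rewrite <- exp_Ropp. rewrite <- exp_plus.
    rewrite <- (exp_ln c) at 2 by lra. rewrite <- exp_Ropp, <- exp_plus. f_equal. ring. }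
  specialize (HC2' s Hs0).
  assert (/ c * exp (- (1 - zeta) * s) <= / c * (C2 * exp (- q * ln s))).
  { apply Rmult_le_compat_l. apply Rlt_le, Rinv_0_lt_compat; lra. lra. }
  unfold Rpower. fold s. fold al.
  replace ((C2 / c + C * exp (- q * ln (zeta / 2))) * exp (- q * ln s)) with
    (/ c * (C2 * exp (- q * ln s)) + C * exp (- q * ln (zeta / 2)) * exp (- q * ln s))
    by (field; lra).
  lra.
Qed.
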